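(* Let $M(C,\bar\xi,\pi)$ be a Myller configuration with Darboux frame $(\bar\xi,\bar\mu,\bar v)$ and invariants $G,K,T$, with $(G,T)\neq(0,0)$ everywhere. Then: (i) if $K\equiv0$, $C$ is a $\bar\mu$-helix iff $\sigma_\mu=\mp\dfrac{T'G-TG'}{(G^2+T^2)^{3/2}}$ is constant; (ii) if $G\equiv0$, $C$ is a $\bar\mu$-helix iff $\sigma_\mu=\pm K/T$ is constant; (iii) if $T\equiv0$, $C$ is a $\bar\mu$-helix iff $\sigma_\mu=\pm K/G$ is constant.
   Context: Let $C$ be a smooth curve in $E^3$ parametrized by arclength $s$; primes denote $d/ds$. A Myller configuration $M(C,\bar\xi,\pi)$ consists of a smooth unit vector field $\bar\xi$ along $C$ and a smooth oriented plane field $\pi$ with $\bar\xi\in\pi$; $\bar v$ is the unit normal of $\pi$, $\bar\mu=\bar v\times\bar\xi$, and $\bar\xi'=G\bar\mu+K\bar v$, $\bar\mu'=-G\bar\xi+T\bar v$, $\bar v'=-K\bar\xi-T\bar\mu$. $C$ is a $\bar\mu$-helix if $\langle\bar\mu,\bar d_\mu\rangle$ is constant along $C$ for some constant unit vector $\bar d_\mu$. *)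

(* Defs.v *)
From Stdlib Require Import Reals.
From Coquelicot Require Import Coquelicot.
Open Scope R_scope.

Record vec := Vec { vx : R ; vy : R ; vz : R }.

Definition dot (u w : vec) : R := vx u * vx w + vy u * vy w + vz u * vz w.

Definition cross (u w : vec) : vec :=
  Vec (vy u * vz w - vz u * vy w)
      (vz u * vx w - vx u * vz w)
      (vx u * vy w - vy u * vx w).

Definition vlin (a : R) (u : vec) (b : R) (w : vec) : vec :=
  Vec (a * vx u + b * vx w) (a * vy u + b * vy w) (a * vz u + b * vz w).

Definition inI (a b s : R) : Prop := a < s < b.

Definition smooth_on (a b : R) (f : R -> R) : Prop :=
  forall (n : nat) (s : R), inI a b s -> ex_derive_n f n s.

Definition vsmooth_on (a b : R) (F : R -> vec) : Prop :=
  smooth_on a b (fun s => vx (F s)) /\ smooth_on a b (fun s => vy (F s)) /\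
  smooth_on a b (fun s => vz (F s)).

Definition vderiv (F : R -> vec) (s : R) (D : vec) : Prop :=
  is_derive (fun t => vx (F t)) s (vx D) /\
  is_derive (fun t => vy (F t)) s (vy D) /\
  is_derive (fun t => vz (F t)) s (vz D).

Definition vDerive (F : R -> vec) (s : R) : vec :=
  Vec (Derive (fun t => vx (F t)) s) (Derive (fun t => vy (F t)) s)
      (Derive (fun t => vz (F t)) s).

(* Myller configuration M(C, xi, pi) on (a,b) with Darboux frame (xi, mu, v)
   (v = unit normal of the oriented plane field pi, mu = v x xi) and
   invariants G, K, T. *)
Definition myller_config (a b : R) (C xi mu v : R -> vec) (G K T : R -> R) : Prop :=
  vsmooth_on a b C /\ vsmooth_on a b xi /\ vsmooth_on a b mu /\ vsmooth_on a b v /\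
  smooth_on a b G /\ smooth_on a b K /\ smooth_on a b T /\
  (forall s, inI a b s ->
     dot (vDerive C s) (vDerive C s) = 1 /\          (* arclength parameter *)
     dot (xi s) (xi s) = 1 /\ dot (v s) (v s) = 1 /\ dot (xi s) (v s) = 0 /\
     mu s = cross (v s) (xi s) /\
     vderiv xi s (vlin (G s) (mu s) (K s) (v s)) /\
     vderiv mu s (vlin (- G s) (xi s) (T s) (v s)) /\
     vderiv v s (vlin (- K s) (xi s) (- T s) (mu s))).

Definition mu_helix (a b : R) (mu : R -> vec) : Prop :=
  exists d : vec, dot d d = 1 /\
    exists c : R, forall s, inI a b s -> dot (mu s) d = c.

Definition const_on (a b : R) (f : R -> R) : Prop :=
  exists k : R, forall s, inI a b s -> f s = k.

(* Main.v *)
Require Import Defs.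
From Stdlib Require Import Reals Lra.
From Coquelicot Require Import Coquelicot.
Open Scope R_scope.
Lemma D_mult f g x df dg: is_derive f x df -> is_derive g x dg -> is_derive (fun t => f t * g t) x (df * g x + f x * dg).
Proof. intros. apply (is_derive_mult f g); auto. intros; apply Rmult_comm. Qed.
Lemma D_plus f g x df dg: is_derive f x df -> is_derive g x dg -> is_derive (fun t => f t + g t) x (df + dg).
Proof. intros. apply (is_derive_plus f g); auto. Qed.
Lemma deriv0_const a b f : (forall s, inI a b s -> is_derive f s 0) ->
  forall s t, inI a b s -> inI a b t -> f s = f t.
Proof.
  intros H s t Hs Ht.
  destruct (MVT_gen f s t (fun _ => 0)) as [c [_ Hc]].
  - intros x Hx. apply H. unfold inI in *. unfold Rmin, Rmax in Hx. destruct Rle_dec; lra.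
  - intros x Hx. apply continuity_pt_filterlim. apply (ex_derive_continuous f). exists 0. apply H.
    unfold inI in *. unfold Rmin, Rmax in Hx. destruct Rle_dec; lra.
  - lra.
Qed.
Lemma loc_inI a b s : inI a b s -> locally s (fun t => inI a b t).
Proof.
  intros Hs. unfold inI in *. assert (He: 0 < Rmin (s - a) (b - s)) by (apply Rmin_pos; lra).
  exists (mkposreal _ He). intros t Ht. cbn in Ht. unfold ball in Ht; cbn in Ht. unfold AbsRing_ball in Ht.
  cbn in Ht. unfold abs, minus, plus, opp in Ht; cbn in Ht.
  pose proof (Rmin_l (s-a) (b-s)). pose proof (Rmin_r (s-a) (b-s)).
  apply Rabs_def2 in Ht. lra.
Qed.
Lemma const_deriv0 a b f c s l : (forall t, inI a b t -> f t = c) -> inI a b s -> is_derive f s l -> l = 0.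
Proof.
  intros Hc Hs Hd.
  assert (is_derive (fun _ => c) s l).
  { eapply is_derive_ext_loc; [|exact Hd]. eapply filter_imp; [|apply (loc_inI a b s Hs)]. intros; auto. }
  apply is_derive_unique in H. rewrite Derive_const in H. auto.
Qed.
Lemma dotC u w : dot u w = dot w u. Proof. unfold dot; ring. Qed.
Lemma gram d w x : (dot d (cross w x))^2 = dot d d * dot w w * dot x x + 2 * dot d w * dot w x * dot x d
  - dot d d * (dot w x)^2 - dot w w * (dot d x)^2 - dot x x * (dot d w)^2.
Proof. destruct d, w, x; unfold dot, cross; simpl; ring. Qed.
Lemma cross_norm w x : dot (cross w x) (cross w x) = dot w w * dot x x - (dot w x)^2.
Proof. destruct w, x; unfold dot, cross; simpl; ring. Qed.
Lemma cross_l w x : dot (cross w x) w = 0. Proof. destruct w, x; unfold dot, cross; simpl; ring. Qed.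
Lemma cross_r w x : dot (cross w x) x = 0. Proof. destruct w, x; unfold dot, cross; simpl; ring. Qed.
Lemma dot_vlin p u q w d : dot (vlin p u q w) d = p * dot u d + q * dot w d.
Proof. destruct u, w, d; unfold dot, vlin; simpl; ring. Qed.

Lemma D_mulc f x df c : is_derive f x df -> is_derive (fun t => f t * c) x (df * c).
Proof. intros H. replace (df * c) with (df * c + f x * 0) by ring. pose proof (is_derive_const (K:=R_AbsRing) c x) as H0. apply (D_mult f (fun _ => c)); [exact H|exact H0]. Qed.
Lemma vderiv_dot F s D d : vderiv F s D -> is_derive (fun t => dot (F t) d) s (dot D d).
Proof.
  intros [H1 [H2 H3]]. unfold dot.
  apply D_plus; [apply D_plus|]; apply D_mulc; auto.
Qed.

Section Fr.
Variables (a b : R) (C xi mu v : R -> vec) (G K T : R -> R).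
Hypothesis HM : myller_config a b C xi mu v G K T.

Lemma frame s : inI a b s ->
  dot (xi s) (xi s) = 1 /\ dot (mu s) (mu s) = 1 /\ dot (v s) (v s) = 1 /\
  dot (xi s) (mu s) = 0 /\ dot (xi s) (v s) = 0 /\ dot (mu s) (v s) = 0 /\
  forall d, dot d d = (dot (xi s) d)^2 + (dot (mu s) d)^2 + (dot (v s) d)^2.
Proof.
  intros Hs. destruct HM as [_ [_ [_ [_ [_ [_ [_ H]]]]]]].
  destruct (H s Hs) as [_ [Hx [Hv [Hxv [Hmu _]]]]].
  rewrite Hmu. repeat split; auto.
  - rewrite cross_norm, Hx, Hv, dotC, Hxv. ring.
  - rewrite dotC, cross_r; auto.
  - rewrite cross_l; auto.
  - intro d. rewrite (dotC (cross _ _) d), gram, Hx, Hv, (dotC (v s) (xi s)), Hxv, (dotC (xi s) d), (dotC (v s) d).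
    rewrite (dotC d (xi s)). ring.
Qed.

Lemma odes s d : inI a b s ->
  is_derive (fun t => dot (xi t) d) s (G s * dot (mu s) d + K s * dot (v s) d) /\
  is_derive (fun t => dot (mu t) d) s (- G s * dot (xi s) d + T s * dot (v s) d) /\
  is_derive (fun t => dot (v t) d) s (- K s * dot (xi s) d - T s * dot (mu s) d).
Proof.
  intros Hs. destruct HM as [_ [_ [_ [_ [_ [_ [_ H]]]]]]].
  destruct (H s Hs) as [_ [_ [_ [_ [_ [H1 [H2 H3]]]]]]].
  apply (vderiv_dot _ _ _ d) in H1. apply (vderiv_dot _ _ _ d) in H2. apply (vderiv_dot _ _ _ d) in H3.
  rewrite dot_vlin in H1, H2, H3. split; [|split]; auto.
  replace (- K s * dot (xi s) d - T s * dot (mu s) d) with (- K s * dot (xi s) d + - T s * dot (mu s) d) by ring. auto.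
Qed.
End Fr.
Lemma D_cmul f x df c : is_derive f x df -> is_derive (fun t => c * f t) x (c * df).
Proof. intros H. eapply is_derive_ext. intro t; apply Rmult_comm. rewrite Rmult_comm. apply D_mulc; auto. Qed.

Section Constr.
Variables (a b : R) (C xi mu v : R -> vec) (G K T : R -> R).
Hypothesis HM : myller_config a b C xi mu v G K T.

Lemma construct (al ga al' ga' : R -> R) (be : R) :
  a < b ->
  (forall s, inI a b s -> is_derive al s (al' s) /\ is_derive ga s (ga' s) /\
      al' s - be * G s - ga s * K s = 0 /\ al s * G s - ga s * T s = 0 /\
      al s * K s + be * T s + ga' s = 0) ->
  (forall s, inI a b s -> 0 < al s ^ 2 + be ^ 2 + ga s ^ 2) ->
  mu_helix a b mu.
Proof.
  intros Hab H Hpos.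
  set (f := fun d t => al t * dot (xi t) d + be * dot (mu t) d + ga t * dot (v t) d).
  assert (Hc : forall d s t, inI a b s -> inI a b t -> f d s = f d t).
  { intros d. apply (deriv0_const a b). intros s Hs.
    destruct (H s Hs) as [Ha [Hg [E1 [E2 E3]]]].
    destruct (odes a b C xi mu v G K T HM s d Hs) as [Dx [Dm Dv]].
    unfold f.
    assert (HD := D_plus _ _ _ _ _ (D_plus _ _ _ _ _ (D_mult _ _ _ _ _ Ha Dx) (D_cmul _ _ _ be Dm)) (D_mult _ _ _ _ _ Hg Dv)).
    match type of HD with is_derive _ _ ?E => replace 0 with E; [exact HD|] end.
    transitivity ((al' s - be * G s - ga s * K s) * dot (xi s) d + (al s * G s - ga s * T s) * dot (mu s) d
       + (al s * K s + be * T s + ga' s) * dot (v s) d); [ring|]. rewrite E1, E2, E3; ring. }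
  set (s0 := (a + b) / 2). assert (Hs0 : inI a b s0) by (unfold inI, s0; lra).
  set (e1 := Vec 1 0 0). set (e2 := Vec 0 1 0). set (e3 := Vec 0 0 1).
  set (D0 := Vec (f e1 s0) (f e2 s0) (f e3 s0)).
  assert (Hid : forall u t, vx u * f e1 t + vy u * f e2 t + vz u * f e3 t =
     al t * dot u (xi t) + be * dot u (mu t) + ga t * dot u (v t)).
  { intros u t. unfold f, e1, e2, e3, dot; simpl. ring. }
  assert (HmuD : forall s, inI a b s -> dot (mu s) D0 = be).
  { intros s Hs. unfold D0. unfold dot at 1; simpl.
    rewrite (Hc e1 s0 s), (Hc e2 s0 s), (Hc e3 s0 s); auto. rewrite (Hid (mu s) s).
    destruct (frame a b C xi mu v G K T HM s Hs) as [F1 [F2 [F3 [F4 [F5 [F6 _]]]]]].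
    rewrite dotC, F4, F2, F6. ring. }
  destruct (frame a b C xi mu v G K T HM s0 Hs0) as [F1 [F2 [F3 [F4 [F5 [F6 _]]]]]].
  assert (HxD : dot (xi s0) D0 = al s0).
  { unfold D0. unfold dot at 1; simpl. rewrite Hid, F1, F4, F5. ring. }
  assert (HvD : dot (v s0) D0 = ga s0).
  { unfold D0. unfold dot at 1; simpl. rewrite Hid, (dotC (v s0) (xi s0)), F5, (dotC (v s0) (mu s0)), F6, F3. ring. }
  assert (HDD : dot D0 D0 = al s0 ^ 2 + be ^ 2 + ga s0 ^ 2).
  { change (dot D0 D0) with (vx D0 * f e1 s0 + vy D0 * f e2 s0 + vz D0 * f e3 s0). rewrite Hid, (dotC D0), (dotC D0), (dotC D0), HxD, HvD, HmuD; auto. ring. }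
  pose proof (Hpos s0 Hs0) as HN. rewrite <- HDD in HN.
  set (r := sqrt (dot D0 D0)).
  assert (Hr : 0 < r) by (apply sqrt_lt_R0; auto).
  assert (Hr2 : r * r = dot D0 D0) by (apply sqrt_sqrt; lra).
  exists (Vec (vx D0 / r) (vy D0 / r) (vz D0 / r)). split.
  - transitivity (dot D0 D0 / (r * r)). { unfold dot; simpl; field. lra. }
    rewrite Hr2. field. lra.
  - exists (be / r). intros s Hs. rewrite <- (HmuD s Hs). unfold dot; simpl; field. lra.
Qed.
End Constr.
Lemma deq (f : R -> R) x (l1 l2 : R) : is_derive f x l1 -> l1 = l2 -> is_derive f x l2.
Proof. intros H ->; exact H. Qed.
Lemma rpow32 q : 0 < q -> Rpower q (3/2) = q * sqrt q.
Proof.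
  intros Hq. replace (3/2) with (1 + /2) by field. rewrite Rpower_plus, Rpower_1, Rpower_sqrt; auto.
Qed.

Lemma dsqrt (G T : R -> R) s g t : is_derive G s g -> is_derive T s t -> 0 < G s ^ 2 + T s ^ 2 ->
  is_derive (fun u => sqrt (G u ^ 2 + T u ^ 2)) s ((2 * g * G s + 2 * t * T s) / (2 * sqrt (G s ^ 2 + T s ^ 2))).
Proof.
  intros Hg Ht Hq.
  assert (Dq : is_derive (fun u => G u ^ 2 + T u ^ 2) s (2 * g * G s + 2 * t * T s)).
  { apply (deq _ _ _ _ (D_plus _ _ _ _ _ (is_derive_pow G 2 s g Hg) (is_derive_pow T 2 s t Ht))). simpl; ring. }
  exact (is_derive_sqrt _ _ _ Dq Hq).
Qed.
Lemma dquot (G T : R -> R) s g t : is_derive G s g -> is_derive T s t -> 0 < G s ^ 2 + T s ^ 2 ->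
  is_derive (fun u => T u / sqrt (G u ^ 2 + T u ^ 2)) s
     (G s * ((t * G s - T s * g) / Rpower (G s ^ 2 + T s ^ 2) (3/2))) /\
  is_derive (fun u => G u / sqrt (G u ^ 2 + T u ^ 2)) s
     (- T s * ((t * G s - T s * g) / Rpower (G s ^ 2 + T s ^ 2) (3/2))).
Proof.
  intros Hg Ht Hq.
  assert (Dq : is_derive (fun u => G u ^ 2 + T u ^ 2) s (2 * g * G s + 2 * t * T s)).
  { apply (deq _ _ _ _ (D_plus _ _ _ _ _ (is_derive_pow G 2 s g Hg) (is_derive_pow T 2 s t Ht))). simpl; ring. }
  assert (Dw := is_derive_sqrt _ _ _ Dq Hq).
  assert (Hw : 0 < sqrt (G s ^ 2 + T s ^ 2)) by (apply sqrt_lt_R0; auto).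
  assert (Hww : sqrt (G s ^ 2 + T s ^ 2) * sqrt (G s ^ 2 + T s ^ 2) = G s ^ 2 + T s ^ 2) by (apply sqrt_sqrt; lra).
  rewrite rpow32; auto.
  set (w := sqrt (G s ^ 2 + T s ^ 2)) in *.
  split.
  - apply (deq _ _ _ _ (is_derive_div _ _ _ _ _ Ht Dw (Rgt_not_eq _ _ Hw))).
    transitivity ((t * (w * w) - T s * (g * G s + t * T s)) / ((w * w) * w)). { change (sqrt (G s ^ 2 + T s ^ 2)) with w. field. lra. }
    rewrite Hww. field. split; lra.
  - apply (deq _ _ _ _ (is_derive_div _ _ _ _ _ Hg Dw (Rgt_not_eq _ _ Hw))).
    transitivity ((g * (w * w) - G s * (g * G s + t * T s)) / ((w * w) * w)). { change (sqrt (G s ^ 2 + T s ^ 2)) with w. field. lra. }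
    rewrite Hww. field. split; lra.
Qed.

Section Main.
Variables (a b : R) (C xi mu v : R -> vec) (G K T : R -> R).
Hypothesis HM : myller_config a b C xi mu v G K T.
Hypothesis Hab : a < b.
Hypothesis HGT : forall s, inI a b s -> G s <> 0 \/ T s <> 0.

Lemma exGT s : inI a b s -> ex_derive G s /\ ex_derive T s.
Proof. intros Hs. destruct HM as [_ [_ [_ [_ [HG [_ [HT _]]]]]]]. split; [exact (HG 1%nat s Hs) | exact (HT 1%nat s Hs)]. Qed.

Let s0 := (a + b) / 2.
Lemma Hs0 : inI a b s0. Proof. unfold inI, s0; lra. Qed.

Lemma part_ii : (forall s, inI a b s -> G s = 0) ->
  (mu_helix a b mu <-> const_on a b (fun s => K s / T s)).
Proof.
  intros HG0. split.
  - intros [d [Hd [c Hc]]].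
    assert (HT0 : forall s, inI a b s -> T s <> 0).
    { intros s Hs. destruct (HGT s Hs) as [H|H]; [exfalso; apply H; apply HG0; auto | auto]. }
    assert (HV : forall s, inI a b s -> dot (v s) d = 0).
    { intros s Hs. destruct (odes a b C xi mu v G K T HM s d Hs) as [_ [Dm _]].
      pose proof (const_deriv0 a b _ c s _ Hc Hs Dm) as E. rewrite HG0 in E; auto.
      pose proof (HT0 s Hs). nra. }
    assert (HX : forall s, inI a b s -> dot (xi s) d = dot (xi s0) d).
    { intros s Hs. apply (deriv0_const a b (fun t => dot (xi t) d)); [|exact Hs|exact Hs0]. intros t Ht.
      destruct (odes a b C xi mu v G K T HM t d Ht) as [Dx _].
      rewrite HG0, HV in Dx; auto. apply (deq _ _ _ _ Dx). ring. }
    set (e := dot (xi s0) d).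
    assert (HK : forall s, inI a b s -> - K s * e - T s * c = 0).
    { intros s Hs. destruct (odes a b C xi mu v G K T HM s d Hs) as [_ [_ Dv]].
      rewrite HX, Hc in Dv; auto. apply (const_deriv0 a b _ 0 s _ HV Hs Dv). }
    destruct (frame a b C xi mu v G K T HM s0 Hs0) as [_ [_ [_ [_ [_ [_ P]]]]]].
    specialize (P d). rewrite Hd, HV, Hc in P; auto using Hs0. fold e in P.
    assert (He : e <> 0).
    { intro E. pose proof (HK s0 Hs0). pose proof (HT0 s0 Hs0). rewrite E in *.
      assert (c * c = 1) by nra. apply H0. nra. }
    exists (- c / e). intros s Hs. pose proof (HK s Hs). pose proof (HT0 s Hs).
    apply (Rmult_eq_reg_r (T s * e)); [|apply Rmult_integral_contrapositive; auto].
    field_simplify; auto. nra.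
  - intros [k Hk].
    apply (construct a b C xi mu v G K T HM (fun _ => 1) (fun _ => 0) (fun _ => 0) (fun _ => 0) (- k) Hab).
    + intros s Hs. pose proof (Hk s Hs) as E. rewrite HG0; auto.
      assert (HT0 : T s <> 0).
      { destruct (HGT s Hs) as [H|H]; [exfalso; apply H; apply HG0; auto | auto]. }
      refine (conj (is_derive_const (K:=R_AbsRing) 1 s) (conj (is_derive_const (K:=R_AbsRing) 0 s) _)).
      split; [ring|split; [ring|]].
      assert (K s = k * T s) as ->. { rewrite <- E. field. auto. } ring.
    + intros; nra.
Qed.

Lemma part_iii : (forall s, inI a b s -> T s = 0) ->
  (mu_helix a b mu <-> const_on a b (fun s => K s / G s)).
Proof.
  intros HT0. split.
  - intros [d [Hd [c Hc]]].
    assert (HG0 : forall s, inI a b s -> G s <> 0).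
    { intros s Hs. destruct (HGT s Hs) as [H|H]; [auto | exfalso; apply H; apply HT0; auto]. }
    assert (HX : forall s, inI a b s -> dot (xi s) d = 0).
    { intros s Hs. destruct (odes a b C xi mu v G K T HM s d Hs) as [_ [Dm _]].
      pose proof (const_deriv0 a b _ c s _ Hc Hs Dm) as E. rewrite HT0 in E; auto.
      pose proof (HG0 s Hs). nra. }
    assert (HV : forall s, inI a b s -> dot (v s) d = dot (v s0) d).
    { intros s Hs. apply (deriv0_const a b (fun t => dot (v t) d)); [|exact Hs|exact Hs0]. intros t Ht.
      destruct (odes a b C xi mu v G K T HM t d Ht) as [_ [_ Dv]].
      rewrite HT0, HX in Dv; auto. apply (deq _ _ _ _ Dv). ring. }
    set (e := dot (v s0) d).
    assert (HK : forall s, inI a b s -> G s * c + K s * e = 0).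
    { intros s Hs. destruct (odes a b C xi mu v G K T HM s d Hs) as [Dx _].
      rewrite HV, Hc in Dx; auto. apply (const_deriv0 a b _ 0 s _ HX Hs Dx). }
    destruct (frame a b C xi mu v G K T HM s0 Hs0) as [_ [_ [_ [_ [_ [_ P]]]]]].
    specialize (P d). rewrite Hd, HX, Hc in P; auto using Hs0. fold e in P.
    assert (He : e <> 0).
    { intro E. pose proof (HK s0 Hs0). pose proof (HG0 s0 Hs0). rewrite E in *.
      assert (c * c = 1) by nra. apply H0. nra. }
    exists (- c / e). intros s Hs. pose proof (HK s Hs). pose proof (HG0 s Hs).
    apply (Rmult_eq_reg_r (G s * e)); [|apply Rmult_integral_contrapositive; auto].
    field_simplify; auto. nra.
  - intros [k Hk].
    apply (construct a b C xi mu v G K T HM (fun _ => 0) (fun _ => -1) (fun _ => 0) (fun _ => 0) k Hab).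
    + intros s Hs. pose proof (Hk s Hs) as E. rewrite HT0; auto.
      assert (HG1 : G s <> 0).
      { destruct (HGT s Hs) as [H|H]; [auto | exfalso; apply H; apply HT0; auto]. }
      refine (conj (is_derive_const (K:=R_AbsRing) 0 s) (conj (is_derive_const (K:=R_AbsRing) (-1) s) _)).
      assert (K s = k * G s) as ->. { rewrite <- E. field. auto. }
      split; [ring|split; ring].
    + intros; nra.
Qed.

Lemma part_i : (forall s, inI a b s -> K s = 0) ->
  (mu_helix a b mu <-> const_on a b (fun s => (Derive T s * G s - T s * Derive G s)
                              / Rpower (G s ^ 2 + T s ^ 2) (3 / 2))).
Proof.
  intros HK0.
  assert (Hq : forall s, inI a b s -> 0 < G s ^ 2 + T s ^ 2).
  { intros s Hs. destruct (HGT s Hs) as [H|H]; [pose proof (pow2_gt_0 _ H) | pose proof (pow2_gt_0 _ H)];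
    pose proof (pow2_ge_0 (G s)); pose proof (pow2_ge_0 (T s)); lra. }
  set (w := fun u => sqrt (G u ^ 2 + T u ^ 2)).
  assert (Hw : forall s, inI a b s -> 0 < w s) by (intros; apply sqrt_lt_R0; auto).
  assert (Hww : forall s, inI a b s -> w s * w s = G s ^ 2 + T s ^ 2) by (intros; apply sqrt_sqrt; pose proof (Hq s H); lra).
  set (sg := fun s => (Derive T s * G s - T s * Derive G s) / Rpower (G s ^ 2 + T s ^ 2) (3 / 2)).
  assert (HD : forall s, inI a b s ->
    is_derive (fun u => T u / w u) s (G s * sg s) /\ is_derive (fun u => G u / w u) s (- T s * sg s)).
  { intros s Hs. destruct (exGT s Hs) as [eG eT].
    exact (dquot G T s _ _ (Derive_correct _ _ eG) (Derive_correct _ _ eT) (Hq s Hs)). }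
  split.
  - intros [d [Hd [c Hc]]].
    set (X := fun t => dot (xi t) d). set (V := fun t => dot (v t) d).
    assert (HXV : forall s, inI a b s -> G s * X s - T s * V s = 0).
    { intros s Hs. destruct (odes a b C xi mu v G K T HM s d Hs) as [_ [Dm _]].
      pose proof (const_deriv0 a b _ c s _ Hc Hs Dm) as E. unfold X, V. lra. }
    assert (DX : forall s, inI a b s -> is_derive X s (G s * c)).
    { intros s Hs. destruct (odes a b C xi mu v G K T HM s d Hs) as [Dx _].
      rewrite HK0, Hc in Dx; auto. apply (deq _ _ _ _ Dx). ring. }
    assert (DV : forall s, inI a b s -> is_derive V s (- T s * c)).
    { intros s Hs. destruct (odes a b C xi mu v G K T HM s d Hs) as [_ [_ Dv]].
      rewrite HK0, Hc in Dv; auto. apply (deq _ _ _ _ Dv). ring. }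
    set (lam := fun t => (T t * X t + G t * V t) / w t).
    assert (Hlam : forall s, inI a b s -> lam s = lam s0).
    { intros s Hs. apply (deriv0_const a b lam); [|exact Hs|exact Hs0]. intros t Ht.
      destruct (exGT t Ht) as [eG eT].
      pose proof (Derive_correct _ _ eG) as DG. pose proof (Derive_correct _ _ eT) as DT.
      pose proof (dsqrt G T t _ _ DG DT (Hq t Ht)) as Dw. fold (w t) in Dw.
      pose proof (D_plus _ _ _ _ _ (D_mult _ _ _ _ _ DT (DX t Ht)) (D_mult _ _ _ _ _ DG (DV t Ht))) as DN.
      pose proof (is_derive_div _ _ _ _ _ DN Dw (Rgt_not_eq _ _ (Hw t Ht))) as DL.
      apply (deq _ _ _ _ DL).
      pose proof (Hw t Ht). pose proof (Hww t Ht). pose proof (HXV t Ht).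
      transitivity (((Derive T t * X t + Derive G t * V t) * (w t * w t)
          - (T t * X t + G t * V t) * (Derive G t * G t + Derive T t * T t)) / (w t * w t * w t)).
      { change (sqrt (G t ^ 2 + T t ^ 2)) with (w t). field. lra. }
      rewrite H0.
      replace ((Derive T t * X t + Derive G t * V t) * (G t ^ 2 + T t ^ 2) -
        (T t * X t + G t * V t) * (Derive G t * G t + Derive T t * T t))
        with ((Derive T t * G t - Derive G t * T t) * (G t * X t - T t * V t)) by ring.
      rewrite H1. field. pose proof (Hq t Ht). split; lra. }
    set (l0 := lam s0).
    assert (HXl : forall s, inI a b s -> X s = l0 * (T s / w s) /\ V s = l0 * (G s / w s)).
    { intros s Hs. unfold l0. rewrite <- (Hlam s Hs). unfold lam.
      pose proof (Hw s Hs). pose proof (Hww s Hs). pose proof (HXV s Hs).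
      split.
      - pose proof (Hq s Hs).
        transitivity (T s * (T s * X s + G s * V s) / (w s * w s)); [|field; lra].
        rewrite H0. replace (T s * (T s * X s + G s * V s)) with (X s * (G s ^ 2 + T s ^ 2) - G s * (G s * X s - T s * V s)) by ring.
        rewrite H1. field. lra.
      - pose proof (Hq s Hs).
        transitivity (G s * (T s * X s + G s * V s) / (w s * w s)); [|field; lra].
        rewrite H0. replace (G s * (T s * X s + G s * V s)) with (V s * (G s ^ 2 + T s ^ 2) + T s * (G s * X s - T s * V s)) by ring.
        rewrite H1. field. lra. }
    assert (Hcs : forall s, inI a b s -> c = l0 * sg s).
    { intros s Hs. destruct (HD s Hs) as [D1 D2].
      assert (E1 : is_derive X s (l0 * (G s * sg s))).
      { eapply is_derive_ext_loc; [|exact (D_cmul _ _ _ l0 D1)].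
        eapply filter_imp; [|apply (loc_inI a b s Hs)]. intros t Ht. symmetry. apply (HXl t Ht). }
      assert (E2 : is_derive V s (l0 * (- T s * sg s))).
      { eapply is_derive_ext_loc; [|exact (D_cmul _ _ _ l0 D2)].
        eapply filter_imp; [|apply (loc_inI a b s Hs)]. intros t Ht. symmetry. apply (HXl t Ht). }
      apply is_derive_unique in E1. apply is_derive_unique in E2.
      pose proof (is_derive_unique _ _ _ (DX s Hs)) as F1. pose proof (is_derive_unique _ _ _ (DV s Hs)) as F2.
      rewrite F1 in E1. rewrite F2 in E2.
      destruct (HGT s Hs) as [H|H].
      + apply (Rmult_eq_reg_l (G s)); auto. rewrite E1. ring.
      + apply (Rmult_eq_reg_l (- T s)); [|intro; apply H; lra]. rewrite E2. ring. }
    assert (Hl0 : l0 <> 0).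
    { intro E. destruct (HXl s0 Hs0) as [E1 E2]. rewrite E in E1, E2. pose proof (Hcs s0 Hs0) as E3. rewrite E in E3.
      destruct (frame a b C xi mu v G K T HM s0 Hs0) as [_ [_ [_ [_ [_ [_ P]]]]]].
      specialize (P d). rewrite Hd, (Hc s0 Hs0) in P. fold (X s0) (V s0) in P.
      rewrite E1, E2, E3 in P. lra. }
    exists (c / l0). intros s Hs. fold (sg s). rewrite (Hcs s Hs). field. auto.
  - intros [k Hk].
    apply (construct a b C xi mu v G K T HM (fun u => T u / w u) (fun u => G u / w u)
             (fun u => G u * sg u) (fun u => - T u * sg u) k Hab).
    + intros s Hs. destruct (HD s Hs) as [D1 D2]. pose proof (Hk s Hs) as E. fold (sg s) in E.
      rewrite HK0; auto. split; [exact D1|split; [exact D2|]]. rewrite E. split; [ring|split; [field; apply Rgt_not_eq, Hw; auto|ring]].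
    + intros s Hs. pose proof (Hw s Hs). pose proof (Hww s Hs).
      assert ((T s / w s) ^ 2 + (G s / w s) ^ 2 = 1).
      { transitivity ((G s ^ 2 + T s ^ 2) / (w s * w s)). field; lra. rewrite <- H0. field. lra. }
      pose proof (pow2_ge_0 k). lra.
Qed.
End Main.
Theorem corollary19 (a b : R) (C xi mu v : R -> vec) (G K T : R -> R) :
  a < b ->
  myller_config a b C xi mu v G K T ->
  (forall s, inI a b s -> G s <> 0 \/ T s <> 0) ->
  ((forall s, inI a b s -> K s = 0) ->
     (mu_helix a b mu <->
      const_on a b (fun s => (Derive T s * G s - T s * Derive G s)
                              / Rpower (G s ^ 2 + T s ^ 2) (3 / 2)))) /\
  ((forall s, inI a b s -> G s = 0) ->
     (mu_helix a b mu <-> const_on a b (fun s => K s / T s))) /\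
  ((forall s, inI a b s -> T s = 0) ->
     (mu_helix a b mu <-> const_on a b (fun s => K s / G s))).
Proof.
  intros Hab HM HGT. split; [|split].
  - exact (part_i a b C xi mu v G K T HM Hab HGT).
  - exact (part_ii a b C xi mu v G K T HM Hab HGT).
  - exact (part_iii a b C xi mu v G K T HM Hab HGT).
Qed.
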